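(* Let $f:\mathbb{R}^n\to\mathbb{R}$ be continuous with bounded lower-level sets, and let $\gamma_k>0$, $\delta_k>0$, $\gamma_k\delta_k\le c$ for all $k\ge1$ and some $c>0$. Then for every $k$ the optimal set $X_k^*$ of $\min_{x\in\mathbb{R}^n}F_k(x)$ is a nonempty compact set, and for any $\hat x\in X$, $$X_k^*\subseteq\Big\{x\in\mathbb{R}^n: f(x)\le f(\hat x)+\frac{c}{4\alpha_{\min}}\Big\}\quad\text{for all }k.$$ In particular, the sequence of sets $\{X_k^*\}$ is uniformly bounded.
   Context: Let $a_1,\dots,a_m\in\mathbb{R}^n$ be nonzero vectors and $b_1,\dots,b_m\in\mathbb{R}$; $X_i=\{x:\langle a_i,x\rangle-b_i\le0\}$, $X=\bigcap_{i=1}^mX_i$ (assumed nonempty), $\alpha_{\min}=\min_i\|a_i\|$. For $\delta>0$, nonzero $a$ and scalar $b$: $h_\delta(x;a,b)=\frac{\langle a,x\rangle-b}{\|a\|}$ if $\langle a,x\rangle-b>\delta$, $\frac{(\langle a,x\rangle-b+\delta)^2}{4\delta\|a\|}$ if $-\delta\le\langle a,x\rangle-b\le\delta$, $0$ if $\langle a,x\rangle-b<-\delta$. For each $k$, $F_k(x)=f(x)+\frac{\gamma_k}{m}\sum_{i=1}^m h_{\delta_k}(x;a_i,b_i)$, and $X_k^*$ is the set of minimizers of $F_k$ over $\mathbb{R}^n$. *)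

(* Defs.v *)
(* R : realType, vectors of R^n are row vectors 'rV[R]_n
   with the (product) topology of MathComp-Analysis; the Euclidean inner product
   and norm are defined explicitly below. *)
From HB Require Import structures.
From mathcomp Require Import all_boot all_order all_algebra.
From mathcomp Require Import all_classical all_reals all_analysis.
Set Implicit Arguments. Unset Strict Implicit. Unset Printing Implicit Defensive.
Import Order.TTheory GRing.Theory Num.Theory.
Import numFieldNormedType.Exports.
Local Open Scope classical_set_scope.
Local Open Scope ring_scope.

Section Defs.
Variable R : realType.

Definition dotp (n : nat) (u v : 'rV[R]_n) : R := \sum_(j < n) u 0 j * v 0 j.

Definition enorm (n : nat) (u : 'rV[R]_n) : R := Num.sqrt (dotp u u).

Definition feasible_set (n m : nat) (a : 'I_m -> 'rV[R]_n) (b : 'I_m -> R)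
  : set 'rV[R]_n := [set x | forall i, dotp (a i) x - b i <= 0].

(* alpha_min = min_i ||a_i|| (the infimum of a finite set; meaningful for m > 0) *)
Definition alpha_min (n m : nat) (a : 'I_m -> 'rV[R]_n) : R :=
  inf (range (fun i => enorm (a i))).

Definition h_delta (n : nat) (delta : R) (a : 'rV[R]_n) (b : R) (x : 'rV[R]_n) : R :=
  let t := dotp a x - b in
  if delta < t then t / enorm a
  else if - delta <= t then (t + delta) ^+ 2 / (4 * delta * enorm a)
  else 0.

Definition Fk (n m : nat) (a : 'I_m -> 'rV[R]_n) (b : 'I_m -> R)
  (f : 'rV[R]_n -> R) (gamma delta : nat -> R) (k : nat) (x : 'rV[R]_n) : R :=
  f x + gamma k / m%:R * \sum_(i < m) h_delta (delta k) (a i) (b i) x.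

Definition Xk_star (n m : nat) (a : 'I_m -> 'rV[R]_n) (b : 'I_m -> R)
  (f : 'rV[R]_n -> R) (gamma delta : nat -> R) (k : nat) : set 'rV[R]_n :=
  [set x | forall y, Fk a b f gamma delta k x <= Fk a b f gamma delta k y].

Definition bounded_lower_level_sets (n : nat) (f : 'rV[R]_n -> R) : Prop :=
  forall t : R, exists M : R, forall x, f x <= t -> enorm x <= M.

End Defs.

(* Main.v *)
Require Import Defs.
From HB Require Import structures.
From mathcomp Require Import all_boot all_order all_algebra.
From mathcomp Require Import all_classical all_reals all_analysis.
From mathcomp Require Import ring lra.
Import Order.TTheory GRing.Theory Num.Theory.
Import numFieldNormedType.Exports.
Local Open Scope classical_set_scope.
Local Open Scope ring_scope.

Section H.
Variable R : realType.

Lemma cont_sum n (I : Type) (r : seq I) (F : I -> 'rV[R]_n -> R) :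
  (forall i, continuous (F i)) -> continuous (fun x => \sum_(i <- r) F i x).
Proof.
move=> Fc; elim: r => [|i r IH].
  under eq_fun do rewrite big_nil. exact: cst_continuous.
under eq_fun do rewrite big_cons.
by move=> x; apply: continuousD; [exact: Fc | exact: IH].
Qed.

Lemma cont_dotp n (a : 'rV[R]_n) : continuous (dotp a).
Proof.
rewrite /dotp; apply: cont_sum => j x.
apply: continuousM; first exact: cst_continuous.
exact: (@coord_continuous R 1 n 0 j).
Qed.

Definition gfun (d na : R) (t : R) : R :=
  ((Num.min (Num.max t (- d)) d + d) ^+ 2 / (4 * d) + Num.max (t - d) 0) / na.

Lemma cont_gfun d na : continuous (gfun d na).
Proof.
move=> t; rewrite /gfun.
apply: cvgM; last exact: cst_continuous.
apply: cvgD.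
  apply: cvgM; last exact: cst_continuous.
  have -> : (fun x : R => (Num.min (Num.max x (- d)) d + d) ^+ 2) =
     (fun x => (Num.min (Num.max x (- d)) d + d) * (Num.min (Num.max x (- d)) d + d)).
    by apply: funext => x; rewrite expr2.
  have hc : {for t, continuous (fun x : R => Num.min (Num.max x (- d)) d + d)}.
    apply: cvgD; last exact: cst_continuous.
    apply: (@continuous_min R R (fun x => Num.max x (- d)) (fun=> d)); last exact: cst_continuous.
    apply: (@continuous_max R R id (fun=> - d)); last exact: cst_continuous.
    exact: cvg_id.
  by apply: cvgM; [exact: hc | exact: hc].
apply: (@continuous_max R R (fun x => x - d) (fun=> 0)); last exact: cst_continuous.
apply: cvgB; [exact: cvg_id | exact: cst_continuous].
Qed.

Lemma h_gfun n d (a : 'rV[R]_n) b x : 0 < d ->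
  h_delta d a b x = gfun d (enorm a) (dotp a x - b).
Proof.
move=> d0; rewrite /h_delta /gfun; set t := dotp a x - b.
case: ifPn => [dt|].
  have -> : Num.max t (- d) = t by apply/max_idPl; lra.
  have -> : Num.min t d = d by apply/min_idPr; lra.
  have -> : Num.max (t - d) 0 = t - d by apply/max_idPl; lra.
  congr (_ / _); field; lra.
rewrite -leNgt => td; case: ifPn => [dt|].
  have -> : Num.max t (- d) = t by apply/max_idPl; lra.
  have -> : Num.min t d = t by apply/min_idPl; lra.
  have -> : Num.max (t - d) 0 = 0 by apply/max_idPr; lra.
  by rewrite addr0 invfM mulrA.
rewrite -ltNge => td'.
have -> : Num.max t (- d) = - d by apply/max_idPr; lra.
have -> : Num.min (- d) d = - d by apply/min_idPl; lra.
have -> : Num.max (t - d) 0 = 0 by apply/max_idPr; lra.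
by rewrite addNr expr0n /= !mul0r addr0 mul0r.
Qed.


Lemma h_ge0 n d (a : 'rV[R]_n) b x : 0 < d -> 0 <= h_delta d a b x.
Proof.
move=> d0; rewrite /h_delta; have na := sqrtr_ge0 (dotp a a).
rewrite /enorm; set t := dotp a x - b.
case: ifPn => [dt|_]; first by apply: divr_ge0 => //; lra.
case: ifPn => // _; apply: divr_ge0; first exact: sqr_ge0.
by apply: mulr_ge0 => //; lra.
Qed.

Lemma h_feas n d (a : 'rV[R]_n) b x : 0 < d -> 0 < enorm a ->
  dotp a x - b <= 0 -> h_delta d a b x <= d / (4 * enorm a).
Proof.
move=> d0 na; rewrite /h_delta; set t := dotp a x - b => t0.
rewrite ifN; last by rewrite -leNgt; lra.
case: ifPn => [dt|_]; last by apply: divr_ge0; lra.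
have -> : d / (4 * enorm a) = d ^+ 2 / (4 * d * enorm a).
  by field; apply/andP; split; apply/lt0r_neq0 => //; lra.
apply: ler_wpM2r.
  by rewrite invr_ge0; apply: mulr_ge0 => //; lra.
nra.
Qed.

Lemma dotp_self_ge n (x : 'rV[R]_n) j : x 0 j ^+ 2 <= dotp x x.
Proof.
rewrite /dotp (bigD1 j) //= -expr2 lerDl.
by apply: sumr_ge0 => i _; rewrite -expr2 sqr_ge0.
Qed.

Lemma enorm_coord n (x : 'rV[R]_n) j : `|x 0 j| <= enorm x.
Proof.
rewrite /enorm -sqrtr_sqr ler_sqrt ?dotp_self_ge //.
by rewrite /dotp; apply: sumr_ge0 => i _; rewrite -expr2 sqr_ge0.
Qed.

Lemma mxnorm_le n (x : 'rV[R]_n) : `|x| <= enorm x.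
Proof.
rewrite [leLHS]/Num.Def.normr /= mx_normrE; apply: bigmax_le; first exact: sqrtr_ge0.
move=> [i j] _ /=; rewrite ord1; exact: enorm_coord.
Qed.

Lemma enorm_gt0 n (a : 'rV[R]_n) : a != 0 -> 0 < enorm a.
Proof.
move=> a0; have [j Hj] : exists j, a 0 j != 0.
  apply: contra_notP (negP a0) => H; apply/eqP/matrixP => i j.
  rewrite ord1 mxE; apply/eqP; apply: contra_notT H => H; by exists j.
rewrite /enorm sqrtr_gt0; have H := (@dotp_self_ge _ a j); apply: lt_le_trans H.
by rewrite exprn_even_gt0 //=.
Qed.

Lemma alpha_prop m n (a : 'I_m -> 'rV[R]_n) : (0 < m)%N -> (forall i, a i != 0) ->
  0 < alpha_min a /\ forall i, alpha_min a <= enorm (a i).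
Proof.
move=> m0 a0; set e := \big[Num.min/1]_i enorm (a i).
have e0 : 0 < e.
  rewrite /e; elim/big_ind: _ => //.
  - by move=> x y x0 y0; rewrite lt_min x0 y0.
  - by move=> i _; exact: enorm_gt0.
have hne : range (fun i => enorm (a i)) !=set0.
  by exists (enorm (a (Ordinal m0))), (Ordinal m0).
split.
  apply: (lt_le_trans e0); apply: lb_le_inf => //.
  by move=> _ [i _ <-]; exact: bigmin_le.
move=> i; apply: ge_inf; last by exists i.
exists 0 => _ [j _ <-]; exact: sqrtr_ge0.
Qed.

Lemma cont_add n (g h : 'rV[R]_n -> R) : continuous g -> continuous h ->
  continuous (fun x => g x + h x).
Proof. by move=> gc hc x; apply: continuousD; [exact: gc | exact: hc]. Qed.

Lemma cont_scale n (c : R) (g : 'rV[R]_n -> R) : continuous g ->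
  continuous (fun x => c * g x).
Proof. by move=> gc x; apply: continuousM; [exact: cst_continuous | exact: gc]. Qed.

Lemma cont_Fk n m (a : 'I_m -> 'rV[R]_n) b f gamma delta k :
  0 < delta k -> continuous f -> continuous (Fk a b f gamma delta k).
Proof.
move=> d0 fc.
have -> : Fk a b f gamma delta k = fun x => f x + gamma k / m%:R *
   \sum_(i < m) h_delta (delta k) (a i) (b i) x by [].
apply: cont_add => //; apply: cont_scale.
apply: (@cont_sum n _ _ (fun i => h_delta (delta k) (a i) (b i))) => i y.
have -> : h_delta (delta k) (a i) (b i) =
  gfun (delta k) (enorm (a i)) \o (fun z => dotp (a i) z - b i).
  by apply: funext => z /=; rewrite h_gfun.
apply: continuous_comp; last exact: cont_gfun.
apply: continuousB; [exact: cont_dotp | exact: cst_continuous].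
Qed.

End H.

Theorem lemma6 (R : realType) (n m : nat)
  (a : 'I_m -> 'rV[R]_n) (b : 'I_m -> R)
  (f : 'rV[R]_n -> R) (gamma delta : nat -> R) (c : R) :
  (0 < m)%N ->
  (forall i, a i != 0) ->
  feasible_set a b !=set0 ->
  continuous f ->
  bounded_lower_level_sets f ->
  0 < c ->
  (forall k : nat, (1 <= k)%N ->
     0 < gamma k /\ 0 < delta k /\ gamma k * delta k <= c) ->
  (forall k : nat, (1 <= k)%N ->
     Xk_star a b f gamma delta k !=set0 /\ compact (Xk_star a b f gamma delta k)) /\
  (forall xhat, feasible_set a b xhat ->
     forall k : nat, (1 <= k)%N ->
       Xk_star a b f gamma delta k `<=`
         [set x | f x <= f xhat + c / (4 * alpha_min a)]) /\
  (exists M : R, forall k : nat, (1 <= k)%N ->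
     forall x, Xk_star a b f gamma delta k x -> enorm x <= M).
Proof.
move=> m0 a0 [xh Xxh] fc fb c0 hk.
have [al0 alle] := alpha_prop _ _ _ _ m0 a0.
have m0R : 0 < m%:R :> R by rewrite ltr0n.
have Fge : forall k, (1 <= k)%N -> forall x, f x <= Fk a b f gamma delta k x.
  move=> k k1 x; have [g0 [d0 _]] := hk k k1; rewrite /Fk lerDl.
  apply: mulr_ge0; first by apply: divr_ge0; [exact: ltW | exact: ltW].
  by apply: sumr_ge0 => i _; exact: (h_ge0 _ _ _ _ _ _ d0).
have Ffeas : forall xhat, feasible_set a b xhat -> forall k, (1 <= k)%N ->
    Fk a b f gamma delta k xhat <= f xhat + c / (4 * alpha_min a).
  move=> xhat Xh k k1; have [g0 [d0 gdc]] := hk k k1; rewrite /Fk lerD2l.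
  have hs : \sum_(i < m) h_delta (delta k) (a i) (b i) xhat <=
            m%:R * (delta k / (4 * alpha_min a)).
    have H : forall i : 'I_m, true ->
        h_delta (delta k) (a i) (b i) xhat <= delta k / (4 * alpha_min a).
      move=> i _.
    apply: le_trans (h_feas _ _ _ _ _ _ d0 (enorm_gt0 _ _ _ (a0 i)) (Xh i)) _.
    apply: ler_wpM2l; first exact: ltW.
    rewrite lef_pV2 ?posrE ?ler_pM2l ?alle //; apply: mulr_gt0 => //.
    exact: (enorm_gt0 _ _ _ (a0 i)).
    apply: le_trans (ler_sum _ H) _.
    by rewrite big_const_ord iter_addr addr0 [X in _ <= X]mulr_natl.
  apply: le_trans (ler_wpM2l _ hs) _.
    by apply: divr_ge0; [exact: ltW | exact: ltW].
  rewrite (mulrA (gamma k / m%:R)) divfK; last exact: lt0r_neq0.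
  rewrite mulrA; apply: ler_wpM2r gdc.
  by rewrite invr_ge0; apply: mulr_ge0 => //; exact: ltW.
have Xbound : forall xhat, feasible_set a b xhat -> forall k, (1 <= k)%N ->
       Xk_star a b f gamma delta k `<=`
         [set x | f x <= f xhat + c / (4 * alpha_min a)].
  move=> xhat Xh k k1 x /= Hx.
  apply: le_trans (Fge k k1 x) _; apply: le_trans (Hx xhat) _.
  exact: Ffeas.
split; last split => //.
- move=> k k1; have [g0 [d0 gdc]] := hk k k1.
  set F := Fk a b f gamma delta k.
  have Fc : continuous F by exact: cont_Fk.
  set S := [set x | F x <= F xh].
  have [M0 HM0] := fb (F xh).
  have Sc : compact S.
    apply: bounded_closed_compact.
      rewrite /=; exists M0; split; first exact: num_real.
      move=> M hM x Sx /=.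
      apply: le_trans (mxnorm_le _ _ x) _; apply: le_trans (HM0 x _) _.
        exact: le_trans (Fge k k1 x) Sx.
      exact: ltW.
    apply: (@preimage_closed _ _ F [set r | r <= F xh]); last exact: closed_le.
    by move=> x _; exact: Fc.
  have [xs xsS xsmin] : exists2 c, c \in S & forall t, t \in S -> F c <= F t.
    apply: EVT_min_rV => //; first by exists xh; rewrite /S /=.
    exact: continuous_subspaceT.
  have xsX : Xk_star a b f gamma delta k xs.
    move=> y; have [yS|yS] := pselect (S y).
      by apply: xsmin; rewrite inE.
    have h1 : F xh < F y by rewrite ltNge; apply/negP.
    have h2 : F xs <= F xh by move: xsS; rewrite inE.
    exact: (le_trans h2 (ltW h1)).
  split; first by exists xs.
  apply: (subclosed_compact _ Sc).
    have -> : Xk_star a b f gamma delta k =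
        \bigcap_(y in setT) (F @^-1` [set r | r <= F y]).
      apply/seteqP; split => x /= H y.
        by move=> _; exact: H.
      exact: (H y I).
    apply: closed_bigI => y _.
    apply: (@preimage_closed _ _ F [set r | r <= F y]); last exact: closed_le.
    by move=> x _; exact: Fc.
  by move=> x Hx; rewrite /S /=; exact: Hx.
- have [M HM] := fb (f xh + c / (4 * alpha_min a)).
  exists M => k k1 x Hx; apply: HM; exact: Xbound xh Xxh k k1 x Hx.
Qed.
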